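(* Let $\gamma>0$. Define a positive sequence $(a_n)_{n\ge 1}$ by $a_n = a_1\,(n\ln^2 n)^{-1}$ for $n\ge 2$, where $a_1>0$ is chosen so that $\sum_{n=1}^\infty a_n=\gamma/2$. Then the infinite product $$w_\gamma(t)=c_\gamma\prod_{n=1}^\infty\Big(\frac{\sin(a_n t)}{a_n t}\Big)^2$$ defines an even, non-negative function $w_\gamma\in L^1(\mathbb{R})$, and $c_\gamma>0$ can be chosen so that $\int_{\mathbb{R}} w_\gamma(t)\,dt=1$. With this choice, for all $t\ge \mathrm{e}^{1/\sqrt2}/\gamma$, $$0\le w_\gamma(t)\le 2(\mathrm{e}\gamma)^2\, t\,\exp\Big(-\frac{2}{7}\,\frac{\gamma t}{\ln^2(\gamma t)}\Big).$$ *)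

(* Defs.v *)
From Stdlib Require Import Reals Lra.
Open Scope R_scope.

Definition sinc (x : R) : R := if Req_EM_T x 0 then 1 else sin x / x.

(* The sequence a_n (n >= 1): a_1 = a1, a_n = a1 / (n ln^2 n) for n >= 2.
   (The value at n = 0 is irrelevant and never used.) *)
Definition aseq (a1 : R) (n : nat) : R :=
  if (n <=? 1)%nat then a1 else a1 / (INR n * (ln (INR n))^2).

Fixpoint partial_prod (a1 : R) (N : nat) (t : R) : R :=
  match N with
  | O => 1
  | S k => partial_prod a1 k t * (sinc (aseq a1 (S k) * t))^2
  end.

(* f is in L^1(R) as a non-negative locally Riemann-integrable function whose
   improper integral over R exists, with value I:
   lim_{M -> +oo} int_{-M}^{M} f = I. *)
Definition improper_integral_R (f : R -> R) (I : R) : Prop :=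
  (forall a b, inhabited (Riemann_integrable f a b)) /\
  forall eps, eps > 0 -> exists M0, forall M (pr : Riemann_integrable f (-M) M),
      M >= M0 -> Rabs (RiemannInt pr - I) < eps.

(* Main.v *)
Require Import Defs.
From Stdlib Require Import Reals Lra Lia Psatz Arith.Factorial ZArith.
Open Scope R_scope.

Lemma inv_e_bounds : 1854/5040 <= exp (-1) <= 265/720.
Proof.
  unfold exp; case (exist_exp (-1)) as (x,e); simpl in |- *;
    unfold exp_in in e;
      assert (H := alternated_series_ineq (fun i:nat => / INR (fact i)) x 3).
  cut
    (sum_f_R0 (tg_alt (fun i:nat => / INR (fact i))) (S (2 * 3)) <= x <=
      sum_f_R0 (tg_alt (fun i:nat => / INR (fact i))) (2 * 3)).
  { intros [H0 H1]. simpl in H0, H1; unfold tg_alt in H0, H1; simpl in H0, H1.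
    split; [eapply Rle_trans; [|apply H0] | eapply Rle_trans; [apply H1|]]; lra. }
  apply H.
  - unfold Un_decreasing; intros;
      apply Rmult_le_reg_l with (INR (fact n)).
    { apply INR_fact_lt_0. }
    apply Rmult_le_reg_l with (INR (fact (S n))).
    { apply INR_fact_lt_0. }
    rewrite Rinv_r.
    2:{ apply INR_fact_neq_0. }
    rewrite Rmult_1_r; rewrite Rmult_comm; rewrite Rmult_assoc;
      rewrite Rinv_l.
    2:{ apply INR_fact_neq_0. }
    rewrite Rmult_1_r; apply le_INR; apply fact_le; apply Nat.le_succ_diag_r.
  - assert (H0 := cv_speed_pow_fact 1); unfold Un_cv; unfold Un_cv in H0;
      intros; elim (H0 _ H1); intros; exists x0; intros;
      unfold Rdist in H2; unfold Rdist;
      replace (/ INR (fact n)) with (1 ^ n / INR (fact n));auto.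
    unfold Rdiv; rewrite pow1; rewrite Rmult_1_l; reflexivity.
  - unfold infinite_sum in e; unfold Un_cv, tg_alt; intros; elim (e _ H0);
      intros; exists x0; intros;
      replace (sum_f_R0 (fun i:nat => (-1) ^ i * / INR (fact i)) n) with
      (sum_f_R0 (fun i:nat => / INR (fact i) * (-1) ^ i) n);auto.
    apply sum_eq; intros; apply Rmult_comm.
Qed.

Lemma e_bounds : 2716/1000 <= exp 1 <= 840/309.
Proof.
  destruct inv_e_bounds as [H1 H2].
  assert (E : exp (-1) * exp 1 = 1) by (rewrite <- exp_plus; replace (-1+1) with 0 by ring; apply exp_0).
  pose proof (exp_pos 1). split; nra.
Qed.



Lemma sin_abs_le x : Rabs (sin x) <= Rabs x.
Proof.
  assert (Hp : forall y, 0 < y -> Rabs (sin y) <= y).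
  { intros y Hy. pose proof (sin_lt_x y Hy).
    destruct (Rle_lt_dec 1 y).
    - pose proof (SIN_bound y). apply Rabs_le; lra.
    - assert (0 < sin y) by (apply sin_pos_tech; lra). rewrite Rabs_right; lra. }
  destruct (Rtotal_order x 0) as [H|[H|H]].
  - assert (E : sin x = - sin (-x)) by (rewrite sin_neg; ring).
    rewrite E, Rabs_Ropp, (Rabs_left x) by lra. apply Hp; lra.
  - subst. rewrite sin_0, Rabs_R0; lra.
  - rewrite (Rabs_right x) by lra. apply Hp; lra.
Qed.

Lemma sq_pos x : x <> 0 -> 0 < x^2.
Proof. intro H. destruct (Rtotal_order x 0) as [h|[h|h]]; [nra|contradiction|nra]. Qed.

Lemma sin_sq_le x : sin x ^ 2 <= x ^ 2.
Proof.
  pose proof (sin_abs_le x). pose proof (Rabs_pos (sin x)).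
  rewrite <- (pow2_abs (sin x)), <- (pow2_abs x). nra.
Qed.

Lemma sinc_even x : sinc (- x) = sinc x.
Proof.
  unfold sinc. destruct (Req_EM_T (-x) 0); destruct (Req_EM_T x 0); try lra.
  rewrite sin_neg. field. auto.
Qed.

Lemma sinc_sq_le1 x : sinc x ^ 2 <= 1.
Proof.
  unfold sinc. destruct (Req_EM_T x 0). lra.
  pose proof (sin_sq_le x).
  replace ((sin x / x)^2) with (sin x ^2 / x^2) by (field; auto).
  assert (0 < x^2) by (apply sq_pos; auto).
  apply Rmult_le_reg_r with (x^2); auto. unfold Rdiv. rewrite Rmult_assoc, Rinv_l; lra.
Qed.

Lemma sinc_sq_nonneg x : 0 <= sinc x ^ 2.
Proof. apply pow2_ge_0. Qed.

Lemma sinc_sq_le_inv x : x <> 0 -> sinc x ^ 2 <= / x^2.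
Proof.
  intro Hx. unfold sinc. destruct (Req_EM_T x 0). contradiction.
  pose proof (SIN_bound x).
  assert (0 < x^2) by (apply sq_pos; auto).
  replace ((sin x / x)^2) with (sin x ^2 * / x^2) by (field; auto).
  assert (sin x ^2 <= 1) by nra.
  pose proof (Rinv_0_lt_compat _ H0). nra.
Qed.

Lemma sin_lb3 x : 0 <= x -> x <= PI -> x - x^3/6 <= sin x.
Proof.
  intros H1 H2. destruct (sin_bound x 0 H1 H2) as [H _].
  unfold sin_approx, sin_term in H. simpl in H. lra.
Qed.

Lemma sinc_ge x : x^2 < 3 -> 1 - x^2/6 <= sinc x.
Proof.
  intro Hx. unfold sinc. destruct (Req_EM_T x 0). nra.
  assert (PI_bd : 3 <= PI) by (pose proof PI2_3_2; lra).
  assert (forall y, 0 < y -> y^2 < 3 -> 1 - y^2/6 <= sin y / y).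
  { intros y Hy Hy2. assert (y <= PI) by nra. pose proof (sin_lb3 y ltac:(lra) H).
    apply Rmult_le_reg_r with y; auto. unfold Rdiv. rewrite Rmult_assoc, Rinv_l by lra. nra. }
  destruct (Rlt_dec 0 x).
  - apply H; auto.
  - replace (sin x / x) with (sin (-x) / (-x)) by (rewrite sin_neg; field; auto).
    replace (x^2) with ((-x)^2) by ring. apply H; [lra|nra].
Qed.

Lemma sinc_sq_ge x : 1 - x^2/3 <= sinc x ^ 2.
Proof.
  destruct (Rlt_dec (x^2) 3).
  - pose proof (sinc_ge x r). assert (0 <= 1 - x^2/6) by nra. nra.
  - pose proof (sinc_sq_nonneg x). nra.
Qed.

Lemma sinc_cont : continuity sinc.
Proof.
  intro x0. destruct (Req_EM_T x0 0) as [->|Hx].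
  - intros eps Heps. exists (Rmin 1 eps). split. apply Rmin_pos; lra.
    intros y [_ Hy]. unfold Rdist in *. simpl in *. unfold Rdist in *.
    rewrite Rminus_0_r in Hy.
    assert (Hy1 : Rabs y < 1) by (eapply Rlt_le_trans; [apply Hy| apply Rmin_l]).
    assert (Hy2 : Rabs y < eps) by (eapply Rlt_le_trans; [apply Hy| apply Rmin_r]).
    assert (y^2 < 1) by (rewrite <- (pow2_abs y); pose proof (Rabs_pos y); nra).
    pose proof (sinc_ge y ltac:(lra)).
    assert (sinc y <= 1).
    { pose proof (sinc_sq_le1 y). destruct (Rle_dec (sinc y) 1); nra. }
    unfold sinc at 2. destruct (Req_EM_T 0 0); [|lra].
    rewrite Rabs_left1 by lra.
    assert (y^2 <= Rabs y) by (rewrite <- (pow2_abs y); pose proof (Rabs_pos y); nra).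
    lra.
  - apply continuity_pt_locally_ext with (f := fun y => sin y / y) (a := Rabs x0).
    + apply Rabs_pos_lt; auto.
    + intros y Hy. unfold sinc. destruct (Req_EM_T y 0); auto.
      subst. unfold Rdist in Hy. rewrite Rminus_0_l, Rabs_Ropp in Hy. lra.
    + apply continuity_pt_div. apply continuity_sin. apply derivable_continuous_pt, derivable_pt_id. auto.
Qed.

Lemma cv_le_tail (u : nat -> R) l b N :
  Un_cv u l -> (forall n, (N <= n)%nat -> u n <= b) -> l <= b.
Proof.
  intros Hc Hb. destruct (Rle_dec l b) as [h|h]; auto. exfalso.
  destruct (Hc (l - b)) as [N1 HN1]; [lra|].
  specialize (HN1 (Nat.max N N1) ltac:(lia)). specialize (Hb (Nat.max N N1) ltac:(lia)).
  unfold Rdist in HN1. apply Rabs_def2 in HN1. lra.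
Qed.

Lemma cv_ge_tail (u : nat -> R) l b N :
  Un_cv u l -> (forall n, (N <= n)%nat -> b <= u n) -> b <= l.
Proof.
  intros Hc Hb. destruct (Rle_dec b l) as [h|h]; auto. exfalso.
  destruct (Hc (b - l)) as [N1 HN1]; [lra|].
  specialize (HN1 (Nat.max N N1) ltac:(lia)). specialize (Hb (Nat.max N N1) ltac:(lia)).
  unfold Rdist in HN1. apply Rabs_def2 in HN1. lra.
Qed.

Lemma INR_ge2 n : (2 <= n)%nat -> 2 <= INR n.
Proof. intro. replace 2 with (INR 2) by (simpl; ring). apply le_INR; auto. Qed.

Lemma ln_pos_nat n : (2 <= n)%nat -> 0 < ln (INR n).
Proof. intro. pose proof (INR_ge2 n H). rewrite <- ln_1. apply ln_increasing; lra. Qed.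

Lemma aseq_ge2 a1 n : (2 <= n)%nat -> aseq a1 n = a1 / (INR n * (ln (INR n))^2).
Proof. intro. unfold aseq. destruct (n <=? 1)%nat eqn:E; auto. apply Nat.leb_le in E; lia. Qed.

Lemma aseq_1 a1 : aseq a1 1 = a1.
Proof. reflexivity. Qed.

Lemma aseq_den_pos n : (2 <= n)%nat -> 0 < INR n * (ln (INR n))^2.
Proof. intro. pose proof (INR_ge2 n H). pose proof (ln_pos_nat n H). nra. Qed.

Lemma aseq_pos a1 n : 0 < a1 -> 0 < aseq a1 n.
Proof.
  intro. destruct (Nat.le_gt_cases n 1).
  - unfold aseq. replace (n <=? 1)%nat with true; auto. symmetry; apply Nat.leb_le; auto.
  - rewrite aseq_ge2 by lia. pose proof (aseq_den_pos n ltac:(lia)).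
    apply Rdiv_lt_0_compat; auto.
Qed.

Lemma aseq_le a1 n : 0 < a1 -> aseq a1 n <= 2 * a1.
Proof.
  intro. destruct (Nat.le_gt_cases n 1).
  - unfold aseq. replace (n <=? 1)%nat with true; [lra|]. symmetry; apply Nat.leb_le; auto.
  - rewrite aseq_ge2 by lia. pose proof (aseq_den_pos n ltac:(lia)).
    pose proof (INR_ge2 n ltac:(lia)).
    assert (/2 < ln (INR n)).
    { apply Rlt_le_trans with (ln 2). apply ln_lt_2.
      destruct (Req_dec (INR n) 2) as [e|e]. rewrite e; lra. left; apply ln_increasing; lra. }
    assert (1/2 <= INR n * ln (INR n) ^ 2) by nra.
    apply Rmult_le_reg_r with (INR n * ln (INR n) ^ 2); auto.
    unfold Rdiv. rewrite Rmult_assoc, Rinv_l by lra. nra.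
Qed.

Lemma pp_S a1 N t : partial_prod a1 (S N) t = partial_prod a1 N t * sinc (aseq a1 (S N) * t) ^ 2.
Proof. reflexivity. Qed.

Lemma pp_bounds a1 N t : 0 <= partial_prod a1 N t <= 1.
Proof.
  induction N; simpl partial_prod. lra.
  pose proof (sinc_sq_le1 (aseq a1 (S N) * t)). pose proof (sinc_sq_nonneg (aseq a1 (S N) * t)). nra.
Qed.

Lemma pp_dec a1 N t : partial_prod a1 (S N) t <= partial_prod a1 N t.
Proof.
  rewrite pp_S. pose proof (pp_bounds a1 N t).
  pose proof (sinc_sq_le1 (aseq a1 (S N) * t)). pose proof (sinc_sq_nonneg (aseq a1 (S N) * t)). nra.
Qed.

Lemma pp_dec_le a1 N M t : (N <= M)%nat -> partial_prod a1 M t <= partial_prod a1 N t.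
Proof.
  induction 1. lra. eapply Rle_trans. apply pp_dec. auto.
Qed.

Lemma pp_even a1 N t : partial_prod a1 N (- t) = partial_prod a1 N t.
Proof.
  induction N; simpl. auto. rewrite IHN. f_equal.
  replace (aseq a1 (S N) * - t) with (- (aseq a1 (S N) * t)) by ring. rewrite sinc_even; auto.
Qed.

Lemma pp_cont a1 N : continuity (partial_prod a1 N).
Proof.
  induction N; simpl.
  - intro; apply continuity_const. intros ? ?; auto.
  - intro x. apply (continuity_pt_mult (partial_prod a1 N) (fun t => sinc (aseq a1 (S N) * t) ^ 2)).
    apply IHN.
    apply (continuity_pt_comp (fun t => sinc (aseq a1 (S N) * t)) (fun z => z ^ 2)).
    + apply (continuity_pt_comp (fun t => aseq a1 (S N) * t) sinc).
      * apply derivable_continuous_pt. apply derivable_pt_scal. apply derivable_pt_id.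
      * apply sinc_cont.
    + apply derivable_continuous_pt. apply derivable_pt_pow.
Qed.

Fixpoint SA (a1 : R) (N : nat) : R :=
  match N with O => 0 | S k => SA a1 k + aseq a1 (S k) end.
Fixpoint SQ (a1 : R) (N : nat) : R :=
  match N with O => 0 | S k => SQ a1 k + aseq a1 (S k) ^ 2 end.

Lemma SA_mono a1 N M : 0 < a1 -> (N <= M)%nat -> SA a1 N <= SA a1 M.
Proof. intros Ha. induction 1. lra. simpl. pose proof (aseq_pos a1 (S m) Ha). lra. Qed.

Lemma SQ_SA a1 N M : 0 < a1 -> (N <= M)%nat -> SQ a1 M - SQ a1 N <= 2 * a1 * (SA a1 M - SA a1 N).
Proof.
  intros Ha. induction 1. lra. simpl.
  pose proof (aseq_pos a1 (S m) Ha). pose proof (aseq_le a1 (S m) Ha). nra.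
Qed.

Lemma pp_lower a1 N M t : (N <= M)%nat ->
  partial_prod a1 N t - t^2/3 * (SQ a1 M - SQ a1 N) <= partial_prod a1 M t.
Proof.
  induction 1. lra. rewrite pp_S. simpl SQ.
  pose proof (sinc_sq_ge (aseq a1 (S m) * t)). pose proof (pp_bounds a1 m t).
  assert (partial_prod a1 m t * (1 - (aseq a1 (S m) * t) ^ 2 / 3) <= partial_prod a1 m t * sinc (aseq a1 (S m) * t) ^ 2) by (apply Rmult_le_compat_l; lra).
  assert (0 <= (aseq a1 (S m) * t) ^ 2 / 3) by (pose proof (pow2_ge_0 (aseq a1 (S m) * t)); lra).
  assert (partial_prod a1 m t * ((aseq a1 (S m) * t) ^ 2 / 3) <= (aseq a1 (S m) * t) ^ 2 / 3) by nra.
  replace ((aseq a1 (S m) * t) ^ 2) with (t^2 * aseq a1 (S m) ^2) in * by ring. nra.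
Qed.

Lemma sum_SA a1 n : sum_f_R0 (fun k => aseq a1 (S k)) n = SA a1 (S n).
Proof. induction n; simpl. ring. simpl in IHn. rewrite IHn. ring. Qed.

Lemma pp_decreasing a1 t : Un_decreasing (fun N => partial_prod a1 N t).
Proof. intro n. apply pp_dec. Qed.

Lemma pp_haslb a1 t : has_lb (fun N => partial_prod a1 N t).
Proof.
  exists 0. intros x [i ->]. unfold opp_seq. pose proof (pp_bounds a1 i t). lra.
Qed.

Definition Wf (a1 t : R) : R :=
  proj1_sig (decreasing_cv (fun N => partial_prod a1 N t) (pp_decreasing a1 t) (pp_haslb a1 t)).

Lemma W_cv a1 t : Un_cv (fun N => partial_prod a1 N t) (Wf a1 t).
Proof. unfold Wf. destruct decreasing_cv; auto. Qed.

Lemma W_le_pp a1 t N : Wf a1 t <= partial_prod a1 N t.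
Proof. apply (cv_le_tail _ _ _ N (W_cv a1 t)). intros. apply pp_dec_le; auto. Qed.

Lemma W_nonneg a1 t : 0 <= Wf a1 t.
Proof. apply (cv_ge_tail _ _ _ 0 (W_cv a1 t)). intros. apply pp_bounds. Qed.

Lemma W_le1 a1 t : Wf a1 t <= 1.
Proof. apply (W_le_pp a1 t 0). Qed.

Lemma W_even a1 t : Wf a1 (- t) = Wf a1 t.
Proof.
  apply UL_sequence with (fun N => partial_prod a1 N t).
  - pose proof (W_cv a1 (-t)). intros e He. destruct (H e He) as [N HN]. exists N.
    intros n Hn. rewrite <- pp_even. auto.
  - apply W_cv.
Qed.

Lemma SA_le a1 g : 0 < a1 -> Un_cv (fun n => SA a1 (S n)) g -> forall N, SA a1 N <= g.
Proof.
  intros Ha Hs N. apply (cv_ge_tail _ _ _ N Hs). intros. apply SA_mono; auto.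
Qed.

Lemma W_lower a1 g t N : 0 < a1 -> Un_cv (fun n => SA a1 (S n)) g ->
  partial_prod a1 N t - t^2/3 * (2 * a1 * (g - SA a1 N)) <= Wf a1 t.
Proof.
  intros Ha Hs. apply (cv_ge_tail _ _ _ N (W_cv a1 t)). intros M HM.
  pose proof (pp_lower a1 N M t HM). pose proof (SQ_SA a1 N M Ha HM).
  pose proof (SA_le a1 g Ha Hs M). pose proof (pow2_ge_0 t).
  assert (t^2/3 * (SQ a1 M - SQ a1 N) <= t^2/3 * (2 * a1 * (g - SA a1 N))).
  { apply Rmult_le_compat_l. lra. nra. }
  lra.
Qed.

Lemma W_cont a1 g : 0 < a1 -> Un_cv (fun n => SA a1 (S n)) g -> continuity (Wf a1).
Proof.
  intros Ha Hs y.
  assert (Hr : 0 < Rabs y + 1) by (pose proof (Rabs_pos y); lra).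
  set (r := mkposreal _ Hr).
  apply (CVU_continuity (fun n => partial_prod a1 n) (Wf a1) 0 r).
  - intros eps He.
    set (K := (Rabs y + 1)^2 / 3 * (2 * a1) + 1).
    assert (HK : 0 < K) by (unfold K; pose proof (pow2_ge_0 (Rabs y + 1)); nra).
    destruct (Hs (eps / K)) as [N0 HN0]. apply Rdiv_lt_0_compat; auto.
    exists (S N0). intros n t Hn Ht.
    unfold Boule in Ht. simpl in Ht. rewrite Rminus_0_r in Ht.
    pose proof (W_le_pp a1 t n). pose proof (W_lower a1 g t n Ha Hs).
    destruct n as [|n]; [lia|].
    specialize (HN0 n ltac:(lia)). unfold Rdist in HN0. apply Rabs_def2 in HN0.
    pose proof (SA_le a1 g Ha Hs (S n)).
    assert (t^2 <= (Rabs y + 1)^2).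
    { rewrite <- (pow2_abs t). pose proof (Rabs_pos t). nra. }
    assert (t^2/3 * (2*a1*(g - SA a1 (S n))) <= (Rabs y + 1)^2/3 * (2*a1) * (g - SA a1 (S n))).
    { assert (0 <= ((Rabs y + 1)^2 - t^2) * (2*a1*(g - SA a1 (S n)))) by (apply Rmult_le_pos; nra). nra. }
    assert (HK1 : (Rabs y + 1)^2/3 * (2*a1) <= K) by (unfold K; lra).
    assert (HD : 0 <= g - SA a1 (S n)) by lra.
    assert (HD2 : g - SA a1 (S n) < eps / K) by lra.
    assert ((Rabs y + 1)^2/3 * (2*a1) * (g - SA a1 (S n)) < K * (eps / K)).
    { apply Rle_lt_trans with (K * (g - SA a1 (S n))).
      apply Rmult_le_compat_r; auto.
      apply Rmult_lt_compat_l; auto. }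
    replace (K * (eps / K)) with eps in * by (field; lra).
    rewrite Rabs_left1 by lra. lra.
  - intros. apply pp_cont.
  - unfold Boule. simpl. rewrite Rminus_0_r. lra.
Qed.

Definition cont_RI (f : R -> R) (Hc : continuity f) (a b : R) : Riemann_integrable f a b.
Proof.
  destruct (Rle_dec a b).
  - apply continuity_implies_RiemannInt; auto.
  - apply RiemannInt_P1. apply continuity_implies_RiemannInt; [lra| auto].
Defined.

Definition Fat (a1 : R) : R -> R := mult_real_fct (2 / a1) (comp atan (mult_real_fct a1 id)).
Definition gat (a1 x : R) : R := 2 / (1 + (a1 * x)^2).

Lemma Fat_lim a1 x : a1 <> 0 -> derivable_pt_lim (Fat a1) x (gat a1 x).
Proof.
  intro Ha. unfold Fat, gat.
  replace (2 / (1 + (a1 * x) ^ 2)) with (2/a1 * (/ (1 + (mult_real_fct a1 id x)^2) * (a1 * 1))).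
  - apply derivable_pt_lim_scal. apply derivable_pt_lim_comp.
    apply derivable_pt_lim_scal. apply derivable_pt_lim_id. apply derivable_pt_lim_atan.
  - unfold mult_real_fct, id. field. split; auto. pose proof (pow2_ge_0 (a1*x)). lra.
Qed.

Definition Fat_der (a1 : R) (Ha : a1 <> 0) : derivable (Fat a1) :=
  fun x => exist _ (gat a1 x) (Fat_lim a1 x Ha).

Lemma gat_cont a1 : continuity (gat a1).
Proof.
  intro x. unfold gat. apply (continuity_pt_div (fun _ => 2) (fun x => 1 + (a1*x)^2)).
  apply continuity_pt_const. intros ? ?; auto.
  apply derivable_continuous_pt. reg.
  pose proof (pow2_ge_0 (a1*x)). lra.
Qed.

Definition Fat_C1 (a1 : R) (Ha : a1 <> 0) : C1_fun.
Proof.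
  apply (@mkC1 (Fat a1) (Fat_der a1 Ha)).
  intro x. apply continuity_pt_locally_ext with (f := gat a1) (a := 1). lra.
  intros; reflexivity. apply gat_cont.
Defined.

Lemma sinc_sq_le_gat z : sinc z ^ 2 <= 2 / (1 + z^2).
Proof.
  pose proof (pow2_ge_0 z).
  destruct (Rle_dec (z^2) 1).
  - pose proof (sinc_sq_le1 z).
    assert (1 <= 2 / (1 + z^2)).
    { apply Rmult_le_reg_r with (1 + z^2). lra. unfold Rdiv. rewrite Rmult_assoc, Rinv_l by lra. lra. }
    lra.
  - assert (z <> 0) by (intro; subst; simpl in n; lra).
    pose proof (sinc_sq_le_inv z H0).
    assert (/ z^2 <= 2 / (1 + z^2)).
    { apply Rmult_le_reg_r with (z^2 * (1 + z^2)). nra.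
      replace (/ z ^ 2 * (z ^ 2 * (1 + z ^ 2))) with (1 + z^2) by (field; auto).
      replace (2 / (1 + z ^ 2) * (z ^ 2 * (1 + z ^ 2))) with (2 * z^2) by (field; lra). lra. }
    lra.
Qed.

Lemma W_le_gat a1 t : Wf a1 t <= gat a1 t.
Proof.
  eapply Rle_trans. apply (W_le_pp a1 t 1). simpl. rewrite aseq_1.
  pose proof (sinc_sq_le_gat (a1 * t)). unfold gat. lra.
Qed.

Lemma int_upper a1 (Ha : 0 < a1) (Hc : continuity (Wf a1)) M :
  0 <= M -> RiemannInt (cont_RI (Wf a1) Hc (-M) M) <= 2 * PI / a1.
Proof.
  intro HM.
  assert (Ha' : a1 <> 0) by lra.
  pose (F := Fat_C1 a1 Ha').
  pose (pr := RiemannInt_P32 F (-M) M).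
  apply Rle_trans with (RiemannInt pr).
  - apply RiemannInt_P19. lra. intros x _. simpl. unfold derive, derive_pt. simpl.
    apply W_le_gat.
  - rewrite FTC_Riemann. simpl. unfold Fat, mult_real_fct, comp, id.
    pose proof (atan_bound (a1 * M)). pose proof (atan_bound (a1 * - M)).
    assert (0 < 2 / a1) by (apply Rdiv_lt_0_compat; lra).
    assert (2/a1 * atan (a1 * M) - 2/a1 * atan (a1 * - M) <= 2/a1 * PI).
    { rewrite <- Rmult_minus_distr_l. apply Rmult_le_compat_l; lra. }
    replace (2 * PI / a1) with (2/a1 * PI) by (field; lra). lra.
Qed.

Lemma int_nonneg f (Hc : continuity f) a b : a <= b -> (forall x, 0 <= f x <= 1) ->
  0 <= RiemannInt (cont_RI f Hc a b).
Proof.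
  intros Hab Hf. pose proof (@RiemannInt_const_bound f a b 0 1 (cont_RI f Hc a b) Hab).
  destruct H. intros; apply Hf. lra.
Qed.

Lemma int_mono f (Hc : continuity f) M1 M2 : 0 <= M1 <= M2 -> (forall x, 0 <= f x <= 1) ->
  RiemannInt (cont_RI f Hc (-M1) M1) <= RiemannInt (cont_RI f Hc (-M2) M2).
Proof.
  intros HM Hf.
  rewrite <- (RiemannInt_P26 (cont_RI f Hc (-M2) (-M1)) (cont_RI f Hc (-M1) M2)).
  rewrite <- (RiemannInt_P26 (cont_RI f Hc (-M1) M1) (cont_RI f Hc M1 M2) (cont_RI f Hc (-M1) M2)).
  pose proof (int_nonneg f Hc (-M2) (-M1) ltac:(lra) Hf).
  pose proof (int_nonneg f Hc M1 M2 ltac:(lra) Hf). lra.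
Qed.

Lemma int_scal f c a b (pr : Riemann_integrable (fun t => c * f t) a b)
  (pr2 : Riemann_integrable f a b) : a <= b -> RiemannInt pr = c * RiemannInt pr2.
Proof.
  intro Hab.
  pose (p0 := RiemannInt_P14 a b 0).
  pose (p3 := RiemannInt_P10 c p0 pr2).
  rewrite (RiemannInt_P18 pr p3 Hab).
  - rewrite (RiemannInt_P13 p0 pr2 p3). unfold p0. rewrite RiemannInt_P15. ring.
  - intros. unfold fct_cte. ring.
Qed.

Lemma nat_above M : exists n : nat, M <= INR n.
Proof.
  destruct (archimed M) as [H1 H2].
  destruct (Z.le_gt_cases 0 (up M)) as [h|h].
  - exists (Z.to_nat (up M)). rewrite INR_IZR_INZ, Z2Nat.id by auto. lra.
  - exists 0%nat. simpl. apply IZR_lt in h. simpl in h. lra.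
Qed.

Lemma improper a1 g (Ha : 0 < a1) (Hg : 0 < g) (Hs : Un_cv (fun n => SA a1 (S n)) (g/2)) :
  exists c, 0 < c /\ c <= 3/5 * g /\ improper_integral_R (fun t => c * Wf a1 t) 1.
Proof.
  pose (Hc := W_cont a1 (g/2) Ha Hs).
  assert (Hb : forall x, 0 <= Wf a1 x <= 1) by (intro; split; [apply W_nonneg|apply W_le1]).
  pose (I := fun M => RiemannInt (cont_RI (Wf a1) Hc (-M) M)).
  assert (Imono : forall M1 M2, 0 <= M1 <= M2 -> I M1 <= I M2) by (intros; apply int_mono; auto).
  assert (Igrow : Un_growing (fun n => I (INR n))).
  { intro n. apply Imono. rewrite S_INR. pose proof (pos_INR n). lra. }
  assert (Iub : has_ub (fun n => I (INR n))).
  { exists (2 * PI / a1). intros x [n ->]. apply int_upper; auto. apply pos_INR. }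
  destruct (growing_cv _ Igrow Iub) as [L HL].
  assert (IleL : forall M, 0 <= M -> I M <= L).
  { intros M HM. destruct (nat_above M) as [n Hn].
    apply Rle_trans with (I (INR n)). apply Imono; lra.
    apply (cv_ge_tail _ _ _ n HL). intros m Hm. apply Imono. split. apply pos_INR. apply le_INR; auto. }
  assert (Ha2 : a1 <= g/2).
  { pose proof (SA_le a1 (g/2) Ha Hs 1) as HH. simpl in HH. rewrite aseq_1 in HH. lra. }
  assert (LL : 5/(3*g) <= L).
  { destruct (nat_above (1/g)) as [n Hn].
    apply (cv_ge_tail _ _ _ n HL). intros m Hm.
    apply Rle_trans with (I (1/g)).
    2: { apply Imono. split. left; apply Rdiv_lt_0_compat; lra. eapply Rle_trans; [apply Hn|apply le_INR; auto]. }
    assert (H0 : 0 < 1/g) by (apply Rdiv_lt_0_compat; lra).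
    destruct (@RiemannInt_const_bound (Wf a1) (-(1/g)) (1/g) (5/6) 1 (cont_RI (Wf a1) Hc (-(1/g)) (1/g))) as [H1 _].
    lra.
    { intros x Hx. split; [|apply Hb].
      pose proof (W_lower a1 (g/2) x 0 Ha Hs) as HW. simpl in HW.
      assert (x * g < 1). { apply Rmult_lt_reg_r with (/g). apply Rinv_0_lt_compat; lra.
        rewrite Rmult_assoc, Rinv_r by lra. lra. }
      assert (-1 < x * g). { apply Rmult_lt_reg_r with (/g). apply Rinv_0_lt_compat; lra.
        rewrite Rmult_assoc, Rinv_r by lra. lra. }
      assert ((x*g)^2 < 1) by nra.
      assert (x^2 * a1 * g <= x^2 * (g/2) * g) by (pose proof (pow2_ge_0 x); nra).
      nra. }
    unfold I. replace (5/(3*g)) with (5/6 * (1/g - - (1/g))) by (field; lra). lra. }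
  assert (HL0 : 0 < L) by (assert (0 < 5/(3*g)) by (apply Rdiv_lt_0_compat; lra); lra).
  exists (/ L). split; [apply Rinv_0_lt_compat; auto|]. split.
  { replace (3/5*g) with (/ (5/(3*g))) by (field; lra).
    apply Rinv_le_contravar; auto. apply Rdiv_lt_0_compat; lra. }
  split.
  - intros a b. constructor. exact (Riemann_integrable_scal (/L) (cont_RI _ Hc a b)).
  - intros eps He. destruct (HL (eps * L)) as [N HN]. nra.
    exists (INR N). intros M pr HM.
    assert (HM0 : 0 <= M) by (pose proof (pos_INR N); lra).
    rewrite (int_scal (Wf a1) (/L) (-M) M pr (cont_RI (Wf a1) Hc (-M) M)) by lra.
    fold (I M). specialize (HN N (le_n N)). unfold Rdist in HN.
    pose proof (IleL (INR N) (pos_INR N)).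
    assert (I (INR N) <= I M) by (apply Imono; split; [apply pos_INR|lra]).
    pose proof (IleL M HM0).
    rewrite Rabs_left1 in HN by lra.
    rewrite Rabs_left1.
    + apply Rmult_lt_reg_l with L; auto.
      replace (L * - (/ L * I M - 1)) with (L - I M) by (field; lra). lra.
    + apply Rmult_le_reg_l with L; auto.
      replace (L * (/ L * I M - 1)) with (I M - L) by (field; lra). lra.
Qed.

Lemma ln_le_sub1 z : 0 < z -> ln z <= z - 1.
Proof. intro. pose proof (exp_ineq1_le (ln z)). rewrite exp_ln in H0; lra. Qed.

Lemma ln_le' x y : 0 < x -> x <= y -> ln x <= ln y.
Proof. intros. destruct H0. left; apply ln_increasing; auto. subst; lra. Qed.

Lemma exp_nat_mult k y : exp (INR k * y) = exp y ^ k.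
Proof.
  induction k. simpl. rewrite Rmult_0_l. apply exp_0.
  rewrite S_INR. replace ((INR k + 1) * y) with (INR k * y + y) by ring.
  rewrite exp_plus, IHk. simpl. ring.
Qed.

Lemma exp_pow_bound k w : (1 <= k)%nat -> 0 <= w -> (1 + w / INR k) ^ k <= exp w.
Proof.
  intros Hk Hw. assert (0 < INR k) by (apply lt_0_INR; lia).
  replace w with (INR k * (w / INR k)) at 2 by (field; lra).
  rewrite exp_nat_mult. apply pow_incr. split.
  assert (0 <= w / INR k) by (unfold Rdiv; apply Rmult_le_pos; [lra|left; apply Rinv_0_lt_compat; lra]). lra.
  apply exp_ineq1_le.
Qed.

Lemma exp_nat_up k : exp (INR k) <= (840/309)^k.
Proof.
  replace (INR k) with (INR k * 1) by ring. rewrite exp_nat_mult.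
  apply pow_incr. pose proof e_bounds. lra.
Qed.

Lemma exp_nat_lo k : (2716/1000)^k <= exp (INR k).
Proof.
  replace (INR k) with (INR k * 1) by ring. rewrite exp_nat_mult.
  apply pow_incr. pose proof e_bounds. lra.
Qed.

Lemma ln2_lb : 9/13 <= ln 2.
Proof.
  assert (exp 9 <= 2^13).
  { assert (E : exp 9 = exp (INR 9)) by (f_equal; simpl; ring). rewrite E.
    eapply Rle_trans. apply exp_nat_up. lra. }
  apply ln_le' in H; [|apply exp_pos]. rewrite ln_exp, ln_pow in H by lra.
  simpl in H. lra.
Qed.

Lemma ln3_lb : 12/11 <= ln 3.
Proof.
  assert (exp 12 <= 3^11).
  { assert (E : exp 12 = exp (INR 12)) by (f_equal; simpl; ring). rewrite E.
    eapply Rle_trans. apply exp_nat_up. lra. }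
  apply ln_le' in H; [|apply exp_pos]. rewrite ln_exp, ln_pow in H by lra.
  simpl in H. lra.
Qed.

Lemma ln4_eq : ln 4 = 2 * ln 2.
Proof. replace 4 with (2*2) by ring. rewrite ln_mult by lra. ring. Qed.

Lemma d_bounds : 3/2 <= ln (13/2) <= 2.
Proof.
  split.
  - assert (exp (3/2) <= 13/2).
    { assert (exp (3/2) ^ 2 <= (13/2)^2).
      { rewrite <- exp_nat_mult. replace (INR 2 * (3/2)) with (INR 3) by (simpl; field).
        eapply Rle_trans. apply exp_nat_up. lra. }
      pose proof (exp_pos (3/2)). nra. }
    apply ln_le' in H; [|apply exp_pos]. rewrite ln_exp in H. auto.
  - assert (13/2 <= exp 2).
    { assert (E : exp 2 = exp (INR 2)) by (f_equal; simpl; ring). rewrite E.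
      eapply Rle_trans; [|apply exp_nat_lo]. lra. }
    apply ln_le' in H; [|lra]. rewrite ln_exp in H. auto.
Qed.

Definition bn (n : nat) : R := 1 / (INR n * ln (INR n) ^ 2).

Lemma aseq_bn a1 n : (2 <= n)%nat -> aseq a1 n = a1 * bn n.
Proof. intro. rewrite aseq_ge2 by auto. unfold bn. pose proof (INR_ge2 n H). pose proof (ln_pos_nat n H).
  field. split; lra. Qed.

Lemma b_tele n : (2 <= n)%nat -> bn (S n) <= 1 / ln (INR n) - 1 / ln (INR (S n)).
Proof.
  intro Hn. unfold bn. rewrite S_INR.
  pose proof (INR_ge2 n Hn) as Hp.
  set (p := INR n) in *.
  assert (HA : 0 < ln p) by (apply ln_pos_nat; auto).
  assert (HB : ln p < ln (p+1)) by (apply ln_increasing; lra).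
  assert (HBA : 1/(p+1) <= ln (p+1) - ln p).
  { pose proof (ln_le_sub1 (p/(p+1)) ltac:(apply Rdiv_lt_0_compat; lra)).
    unfold Rdiv in H. rewrite ln_mult, ln_Rinv in H by (try apply Rinv_0_lt_compat; lra).
    replace (p * / (p+1) - 1) with (- (1/(p+1))) in H by (field; lra). lra. }
  set (A := ln p) in *. set (B := ln (p+1)) in *.
  assert (0 < 1/(p+1)) by (apply Rdiv_lt_0_compat; lra).
  replace (1/A - 1/B) with ((B - A)/(A*B)) by (field; lra).
  apply Rle_trans with ((1/(p+1))/(A*B)).
  - unfold Rdiv. rewrite !Rmult_1_l. rewrite <- Rinv_mult.
    assert (0 < A*B) by nra.
    apply Rinv_le_contravar. apply Rmult_lt_0_compat; lra.
    assert (A*B <= B * B) by nra.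
    assert ((p+1) * (A*B) <= (p+1) * (B*B)) by nra. simpl. nra.
  - unfold Rdiv. apply Rmult_le_compat_r. left; apply Rinv_0_lt_compat; nra. lra.
Qed.

Definition K4 : R := 1 + bn 2 + bn 3 + bn 4 + 1 / ln (INR 4).

Lemma SA_bound4 a1 N : 0 < a1 -> (4 <= N)%nat -> SA a1 N <= a1 * (K4 - 1 / ln (INR N)).
Proof.
  intros Ha HN. induction HN.
  - simpl SA. rewrite aseq_1, !aseq_bn by lia. unfold K4. lra.
  - simpl SA. rewrite aseq_bn by lia. pose proof (b_tele m ltac:(lia)). nra.
Qed.

Lemma K4_le : K4 <= 13/4.
Proof.
  unfold K4, bn. pose proof ln2_lb. pose proof ln3_lb.
  assert (E2 : INR 2 = 2) by (simpl; ring). assert (E3 : INR 3 = 3) by (simpl; ring).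
  assert (E4 : INR 4 = 4) by (simpl; ring). rewrite E2, E3, E4, ln4_eq.
  assert (1 / (2 * ln 2 ^ 2) <= 1 / (2 * (9/13)^2)).
  { unfold Rdiv. rewrite !Rmult_1_l. apply Rinv_le_contravar. nra. nra. }
  assert (1 / (3 * ln 3 ^ 2) <= 1 / (3 * (12/11)^2)).
  { unfold Rdiv. rewrite !Rmult_1_l. apply Rinv_le_contravar. nra. nra. }
  assert (1 / (4 * (ln 4) ^ 2) <= 1 / (4 * (18/13)^2)).
  { rewrite ln4_eq. unfold Rdiv. rewrite !Rmult_1_l. apply Rinv_le_contravar. nra. nra. }
  rewrite ln4_eq in H3.
  assert (1 / (2 * ln 2) <= 1 / (18/13)).
  { unfold Rdiv. rewrite !Rmult_1_l. apply Rinv_le_contravar. nra. nra. }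
  lra.
Qed.

Lemma SA_bound a1 N : 0 < a1 -> SA a1 N <= a1 * (13/4).
Proof.
  intro Ha. pose proof K4_le.
  assert (forall N, (4 <= N)%nat -> SA a1 N <= a1 * (13/4)).
  { intros M HM. pose proof (SA_bound4 a1 M Ha HM).
    assert (0 < ln (INR M)) by (apply ln_pos_nat; lia).
    assert (0 < 1 / ln (INR M)) by (apply Rdiv_lt_0_compat; lra). nra. }
  destruct (Nat.le_gt_cases 4 N). auto.
  apply Rle_trans with (SA a1 4). apply SA_mono; auto; lia. apply H0; lia.
Qed.

Lemma alpha_lb a1 g : 0 < a1 -> Un_cv (fun n => SA a1 (S n)) (g/2) -> 2/13 * g <= a1.
Proof.
  intros Ha Hs. assert (g/2 <= a1 * (13/4)).
  { apply (cv_le_tail _ _ _ 0 Hs). intros. apply SA_bound; auto. }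
  lra.
Qed.

Fixpoint Qs (a1 t : R) (N : nat) : R :=
  match N with O => 0 | S k => Qs a1 t k + ln (aseq a1 (S k) * t) end.
Fixpoint LF (N : nat) : R :=
  match N with O => 0 | S k => LF k + ln (INR (S k)) end.

Lemma exp_m2ln z : 0 < z -> exp (-2 * ln z) = / z^2.
Proof.
  intro. replace (-2 * ln z) with (- (INR 2 * ln z)) by (simpl; ring).
  rewrite exp_Ropp, exp_nat_mult, exp_ln; auto.
Qed.

Lemma pp_le_expQ a1 t N : 0 < a1 -> 0 < t -> partial_prod a1 N t <= exp (-2 * Qs a1 t N).
Proof.
  intros Ha Ht. induction N; simpl.
  - rewrite Rmult_0_r, exp_0. lra.
  - set (z := aseq a1 (S N) * t).
    assert (Hz : 0 < z) by (apply Rmult_lt_0_compat; auto; apply aseq_pos; auto).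
    replace (-2 * (Qs a1 t N + ln z)) with (-2 * Qs a1 t N + -2 * ln z) by ring.
    rewrite exp_plus, exp_m2ln by auto.
    pose proof (sinc_sq_le_inv z ltac:(lra)). pose proof (sinc_sq_nonneg z).
    pose proof (pp_bounds a1 N t). pose proof (exp_pos (-2 * Qs a1 t N)).
    apply Rmult_le_compat; lra.
Qed.

Lemma ln_gap p : 0 < p -> 1/(p+1) <= ln (p+1) - ln p.
Proof.
  intro. pose proof (ln_le_sub1 (p/(p+1)) ltac:(apply Rdiv_lt_0_compat; lra)).
  unfold Rdiv in H0. rewrite ln_mult, ln_Rinv in H0 by (try apply Rinv_0_lt_compat; lra).
  replace (p * / (p+1) - 1) with (- (1/(p+1))) in H0 by (field; lra). lra.
Qed.

Lemma LF_bound N : (1 <= N)%nat ->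
  LF N <= INR N * ln (INR N) - INR N + ln (INR N) + 1.
Proof.
  induction 1.
  - simpl. rewrite ln_1. lra.
  - change (LF (S m)) with (LF m + ln (INR (S m))). rewrite S_INR. assert (1 <= INR m) by (replace 1 with (INR 1) by auto; apply le_INR; auto).
    pose proof (ln_gap (INR m) ltac:(lra)).
    assert ((INR m + 1) * (1 / (INR m + 1)) = 1) by (field; lra).
    assert ((INR m + 1) * (1/(INR m + 1)) <= (INR m + 1) * (ln (INR m + 1) - ln (INR m))) by (apply Rmult_le_compat_l; lra).
    lra.
Qed.

Lemma ln_term a1 t n : 0 < a1 -> 0 < t -> (2 <= n)%nat ->
  ln (aseq a1 n * t) = ln (a1 * t) - ln (INR n) - 2 * ln (ln (INR n)).
Proof.
  intros Ha Ht Hn. rewrite aseq_ge2 by auto.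
  pose proof (INR_ge2 n Hn). pose proof (ln_pos_nat n Hn).
  replace (a1 / (INR n * ln (INR n) ^ 2) * t) with ((a1 * t) * / INR n * / (ln (INR n) ^2)) by (field; lra).
  assert (HX : 0 < a1 * t) by (apply Rmult_lt_0_compat; lra).
  assert (HB2 : 0 < ln (INR n) ^ 2) by (apply pow_lt; lra).
  assert (HiA : 0 < / INR n) by (apply Rinv_0_lt_compat; lra).
  assert (HiB : 0 < / ln (INR n) ^ 2) by (apply Rinv_0_lt_compat; lra).
  rewrite ln_mult; [|apply Rmult_lt_0_compat; lra|lra].
  rewrite ln_mult by lra.
  rewrite !ln_Rinv by lra.
  rewrite ln_pow by lra. simpl. ring.
Qed.

Lemma Qs_lower a1 t M N : 0 < a1 -> 0 < t -> (1 <= N)%nat -> (N <= M)%nat -> (2 <= M)%nat ->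
  INR N * ln (a1 * t) - LF N - 2 * (INR N - 1) * ln (ln (INR M)) <= Qs a1 t N.
Proof.
  intros Ha Ht. induction 1; intros HM HM2.
  - simpl. rewrite aseq_1, ln_1. lra.
  - change (Qs a1 t (S m)) with (Qs a1 t m + ln (aseq a1 (S m) * t)).
    change (LF (S m)) with (LF m + ln (INR (S m))). rewrite ln_term by (auto; lia). rewrite S_INR.
    specialize (IHle ltac:(lia) HM2).
    assert (ln (ln (INR (S m))) <= ln (ln (INR M))).
    { apply ln_le'. apply ln_pos_nat; lia. apply ln_le'. pose proof (INR_ge2 (S m) ltac:(lia)); lra.
      apply le_INR; auto. }
    rewrite S_INR in H0. lra.
Qed.

Lemma exp_le a b : a <= b -> exp a <= exp b.
Proof. intro. destruct H. left; apply exp_increasing; auto. subst; lra. Qed.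

Lemma W_decay a1 t N : 0 < a1 -> 0 < t -> (3 <= N)%nat -> INR N * ln (INR N) ^ 2 <= a1 * t ->
  Wf a1 t <= exp (2 + 2 * ln (INR N) - 2 * INR N).
Proof.
  intros Ha Ht HN Hx.
  eapply Rle_trans. apply (W_le_pp a1 t N). eapply Rle_trans. apply pp_le_expQ; auto.
  apply exp_le.
  pose proof (Qs_lower a1 t N N Ha Ht ltac:(lia) (le_n N) ltac:(lia)).
  pose proof (LF_bound N ltac:(lia)).
  assert (H3 : 3 <= INR N) by (replace 3 with (INR 3) by (simpl; ring); apply le_INR; auto).
  assert (HlN : 1 <= ln (INR N)).
  { pose proof ln3_lb. assert (ln 3 <= ln (INR N)) by (apply ln_le'; lra). lra. }
  assert (HL2 : 0 <= ln (ln (INR N))).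
  { rewrite <- ln_1. apply ln_le'; lra. }
  assert (Hlx : ln (INR N) + 2 * ln (ln (INR N)) <= ln (a1 * t)).
  { assert (0 < INR N * ln (INR N) ^ 2) by (apply Rmult_lt_0_compat; [lra| apply pow_lt; lra]).
    pose proof (ln_le' _ _ H1 Hx). rewrite ln_mult, ln_pow in H2 by (try apply pow_lt; lra).
    simpl in H2. lra. }
  assert (0 <= INR N * (ln (a1 * t) - ln (INR N) - 2 * ln (ln (INR N)))) by (apply Rmult_le_pos; lra).
  nra.
Qed.

Lemma div_le_div a b c d : 0 < b -> 0 < d -> a * d <= c * b -> a / b <= c / d.
Proof.
  intros Hb Hd H. apply Rmult_le_reg_r with (b * d). nra.
  replace (a / b * (b * d)) with (a * d) by (field; lra).
  replace (c / d * (b * d)) with (c * b) by (field; lra). lra.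
Qed.

Lemma mono_xl2 x1 x2 : 0 < x1 -> 2 <= ln x1 -> x1 <= x2 -> x1 / ln x1 ^ 2 <= x2 / ln x2 ^ 2.
Proof.
  intros H1 HL H12.
  set (L := ln x1) in *. set (rho := ln x2 - L).
  assert (Hr : 0 <= rho) by (unfold rho, L; pose proof (ln_le' x1 x2 H1 H12); lra).
  assert (Hx2 : x2 = x1 * exp rho).
  { unfold rho, L, Rminus. rewrite exp_plus, exp_Ropp, !exp_ln by lra. field. lra. }
  assert (Hl2 : ln x2 = L + rho) by (unfold rho; ring).
  rewrite Hl2, Hx2.
  pose proof (exp_pow_bound 2 rho ltac:(lia) Hr). simpl INR in H. simpl in H.
  apply div_le_div. apply pow_lt; lra. apply pow_lt; lra.
  assert ((L + rho) <= (1 + rho / (1+1)) * L) by nra.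
  assert ((L + rho)^2 <= ((1 + rho / (1+1)) * L)^2) by (apply pow_incr; lra).
  assert (((1 + rho / (1+1)) * L)^2 = (1 + rho / (1 + 1)) * ((1 + rho / (1 + 1)) * 1) * L^2) by ring.
  assert (0 <= L^2) by nra.
  set (q := (1 + rho / (1 + 1)) * ((1 + rho / (1 + 1)) * 1)) in *.
  apply Rle_trans with (x1 * (q * L^2)).
  apply Rmult_le_compat_l; lra.
  replace (x1 * exp rho * L^2) with (x1 * (exp rho * L^2)) by ring.
  apply Rmult_le_compat_l. lra. apply Rmult_le_compat_r; lra.
Qed.

Lemma exp_ge_3sq v : 5 <= v -> 3 * v ^ 2 <= exp v.
Proof.
  intro Hv. replace v with (5 + (v - 5)) at 2 by ring. rewrite exp_plus.
  assert (E5 : 143 <= exp 5).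
  { assert (E : exp 5 = exp (INR 5)) by (f_equal; simpl; ring). rewrite E.
    eapply Rle_trans; [|apply exp_nat_lo]. lra. }
  pose proof (exp_pow_bound 2 (v - 5) ltac:(lia) ltac:(lra)). simpl INR in H. simpl in H.
  assert (0 <= (1 + (v - 5) / (1 + 1)) * ((1 + (v - 5) / (1 + 1)) * 1)) by nra.
  nra.
Qed.

Lemma lnz_dec z1 z2 : 1 <= z1 -> z1 <= z2 -> ln z2 - z2 <= ln z1 - z1.
Proof.
  intros H1 H2. pose proof (ln_le_sub1 (z2/z1) ltac:(apply Rdiv_lt_0_compat; lra)).
  unfold Rdiv in H. rewrite ln_mult, ln_Rinv in H by (try apply Rinv_0_lt_compat; lra).
  assert (z2 * / z1 - 1 <= z2 - z1).
  { replace (z2 * / z1 - 1) with ((z2 - z1) / z1) by (field; lra).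
    apply Rmult_le_reg_r with z1. lra. unfold Rdiv. rewrite Rmult_assoc, Rinv_l by lra. nra. }
  lra.
Qed.

Lemma floor3 y : 3 <= y -> exists N : nat, (3 <= N)%nat /\ INR N <= y /\ y - 1 < INR N.
Proof.
  intro Hy. destruct (archimed y) as [H1 H2].
  assert (Hz : (0 <= up y - 1)%Z).
  { assert (IZR 1 < IZR (up y)) by (simpl; lra). apply lt_IZR in H. lia. }
  exists (Z.to_nat (up y - 1)).
  assert (E : INR (Z.to_nat (up y - 1)) = IZR (up y) - 1).
  { rewrite INR_IZR_INZ, Z2Nat.id by auto. rewrite minus_IZR. simpl. ring. }
  rewrite E. split; [|lra].
  assert (2 < INR (Z.to_nat (up y - 1))) by (rewrite E; lra).
  replace 2 with (INR 2) in H by (simpl; ring). apply INR_lt in H. lia.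
Qed.

Lemma exp_s6 s : 7 <= s -> 1085/117649 * s ^ 6 <= exp s.
Proof.
  intro Hs. replace s with (7 + (s - 7)) at 2 by ring. rewrite exp_plus.
  assert (E7 : 1085 <= exp 7).
  { assert (E : exp 7 = exp (INR 7)) by (f_equal; simpl; ring). rewrite E.
    eapply Rle_trans; [|apply exp_nat_lo]. lra. }
  pose proof (exp_pow_bound 6 (s - 7) ltac:(lia) ltac:(lra)).
  assert ((s/7)^6 <= (1 + (s - 7) / INR 6) ^ 6).
  { apply pow_incr. split. nra. simpl. lra. }
  assert (0 <= (s/7)^6) by (apply pow_le; lra).
  replace (1085/117649 * s^6) with (1085 * (s/7)^6) by (field).
  apply Rmult_le_compat; lra.
Qed.

Lemma key_poly s u : 7 <= s -> 1085/117649 * s ^ 6 <= u ->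
  s - 5 <= 4/13 * u / (s - 3/2)^2 - 2/7 * u / s^2.
Proof.
  intros Hs Hu. set (w := s - 3/2).
  assert (Hw : 11/2 <= w) by (unfold w; lra).
  set (Num := 4/13 * s^2 - 2/7 * w^2).
  assert (HN : 0 < Num) by (unfold Num, w; nra).
  replace (4/13 * u / w^2 - 2/7 * u / s^2) with (u * Num / (s^2 * w^2)) by (unfold Num; field; lra).
  assert (H1 : u * Num / s^4 <= u * Num / (s^2 * w^2)).
  { apply div_le_div. apply pow_lt; lra. assert (0 < s^2 * w^2) by (apply Rmult_lt_0_compat; apply pow_lt; lra). lra.
    assert (0 < u) by (assert (0 < s^6) by (apply pow_lt; lra); nra).
    assert (w^2 <= s^2) by (unfold w; nra).
    assert (s^2 * w^2 <= s^4).
    { replace (s^4) with (s^2 * s^2) by ring. apply Rmult_le_compat_l; [apply pow2_ge_0|lra]. }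
    assert (0 < u * Num) by (apply Rmult_lt_0_compat; lra).
    apply Rmult_le_compat_l; lra. }
  assert (H2 : 1085/117649 * s^2 * Num <= u * Num / s^4).
  { apply Rmult_le_reg_r with (s^4). apply pow_lt; lra.
    replace (u * Num / s ^ 4 * s ^ 4) with (u * Num) by (field; lra).
    replace (1085 / 117649 * s ^ 2 * Num * s ^ 4) with ((1085 / 117649 * s ^ 6) * Num) by ring.
    apply Rmult_le_compat_r; lra. }
  assert (s - 5 <= 1085/117649 * s^2 * Num).
  { assert (HN1 : 6/7 * s - 9/14 <= Num) by (unfold Num, w; nra).
    assert (0 <= s^2 - 7 * s) by nra.
    assert (1085/117649 * (7 * s) * (6/7 * s - 9/14) <= 1085/117649 * s^2 * Num).
    { apply Rmult_le_compat. nra. nra. nra. lra. }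
    nra. }
  lra.
Qed.

Lemma rhs_rewrite g t : 0 < g -> 0 < t ->
  2 * (exp 1 * g)^2 * t * exp (- (2/7) * (g * t / (ln (g*t))^2)) =
  2 * g * exp (2 + ln (g*t) - 2/7 * (g * t / (ln (g*t))^2)).
Proof.
  intros Hg Ht.
  replace (2 + ln (g*t) - 2/7 * (g * t / (ln (g*t))^2)) with
    (INR 2 * 1 + (ln (g*t) + - (2/7) * (g * t / (ln (g*t))^2))) by (simpl; ring).
  rewrite !exp_plus, exp_nat_mult, exp_ln by (apply Rmult_lt_0_compat; lra). simpl. ring.
Qed.

Lemma large_range a1 g c t : 0 < a1 -> 0 < g -> 0 < t -> 2/13 * g <= a1 -> 0 < c <= 3/5 * g ->
  7 <= ln (g * t) ->
  c * Wf a1 t <= 2 * (exp 1 * g)^2 * t * exp (- (2/7) * (g * t / (ln (g*t))^2)).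
Proof.
  intros Ha Hg Ht Hal Hc Hs.
  rewrite rhs_rewrite by auto.
  set (u := g * t) in *. assert (Hu : 0 < u) by (unfold u; apply Rmult_lt_0_compat; lra).
  set (s := ln u) in *.
  set (xl := 2/13 * u). set (x := a1 * t).
  assert (Hxl : 0 < xl) by (unfold xl; lra).
  assert (Hxxl : xl <= x) by (unfold xl, x, u; nra).
  set (v := ln xl).
  assert (Hv : s - 2 <= v <= s - 3/2).
  { unfold v, xl. rewrite ln_mult by lra. replace (2/13) with (/ (13/2)) by field.
    rewrite ln_Rinv by lra. pose proof d_bounds. fold s. lra. }
  assert (Hxle : xl = exp v) by (unfold v; rewrite exp_ln; auto).
  set (yl := xl / v^2).
  assert (Hv0 : 0 < v^2) by (apply pow_lt; lra).
  assert (Hyl3 : 3 <= yl).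
  { unfold yl. pose proof (exp_ge_3sq v ltac:(lra)). rewrite <- Hxle in H.
    apply Rmult_le_reg_r with (v^2); auto. unfold Rdiv. rewrite Rmult_assoc, Rinv_l by lra. lra. }
  assert (Hlx : v <= ln x) by (apply ln_le'; auto).
  set (y := x / (ln x)^2).
  assert (Hyly : yl <= y) by (unfold yl, y, v; apply mono_xl2; auto; fold v; lra).
  assert (Hlx2 : 0 < ln x ^ 2) by (apply pow_lt; lra).
  assert (Hx0 : 0 < x) by lra.
  assert (Hyx : y <= x).
  { unfold y. apply Rmult_le_reg_r with (ln x ^ 2); auto. unfold Rdiv. rewrite Rmult_assoc, Rinv_l by lra.
    assert (1 <= ln x ^2) by nra. nra. }
  destruct (floor3 y ltac:(lra)) as [N [HN3 [HNy HNy1]]].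
  assert (HN3' : 3 <= INR N) by (replace 3 with (INR 3) by (simpl; ring); apply le_INR; auto).
  assert (HlnN : 0 <= ln (INR N)) by (rewrite <- ln_1; apply ln_le'; lra).
  assert (HlnNx : ln (INR N) <= ln x) by (apply ln_le'; lra).
  assert (HNx : INR N * ln (INR N) ^ 2 <= x).
  { apply Rle_trans with (y * ln x ^ 2).
    apply Rmult_le_compat; try lra. apply pow2_ge_0. apply pow_incr; lra.
    unfold y. field_simplify; lra. }
  pose proof (W_decay a1 t N Ha Ht HN3 HNx) as HW.
  pose proof (lnz_dec (yl - 1) (INR N) ltac:(lra) ltac:(lra)) as Hdec.
  assert (Hlyl : ln (yl - 1) <= ln yl) by (apply ln_le'; lra).
  assert (Hlnyl : ln yl = v - 2 * ln v).
  { unfold yl. unfold Rdiv. rewrite ln_mult, ln_Rinv, ln_pow by (try apply Rinv_0_lt_compat; lra).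
    fold v. simpl. ring. }
  assert (Hlnv : 1 <= ln v).
  { pose proof ln3_lb. assert (ln 3 <= ln v) by (apply ln_le'; lra). lra. }
  assert (Hkey : s - 5 <= 4/13 * u / (s - 3/2)^2 - 2/7 * u / s^2).
  { apply key_poly; auto. unfold s. rewrite <- (exp_ln u) at 2 by auto. apply exp_s6; auto. }
  assert (Hyl2 : 4/13 * u / (s - 3/2)^2 <= 2 * yl).
  { unfold yl, xl. replace (2 * (2/13 * u / v^2)) with (4/13 * u / v^2) by (field; lra).
    apply div_le_div. nra. auto. assert (v^2 <= (s - 3/2)^2) by nra. nra. }
  assert (Hexp : 2 + 2 * ln (INR N) - 2 * INR N <= 2 + s - 2 / 7 * (u / s ^ 2)).
  { assert (u / s^2 = u * / s^2) by auto. unfold Rdiv in Hkey. lra. }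
  apply Rle_trans with (3/5 * g * exp (2 + s - 2 / 7 * (u / s ^ 2))).
  - apply Rmult_le_compat; try lra. apply W_nonneg. eapply Rle_trans; [apply HW|]. apply exp_le; auto.
  - pose proof (exp_pos (2 + s - 2 / 7 * (u / s ^ 2))). nra.
Qed.

Lemma piece s a b Eb : 0 < a <= s -> s <= b -> exp b <= Eb -> 2/7 * Eb <= (a + 31/10) * a^2 ->
  2/7 * (exp s / s^2) <= s + 31/10.
Proof.
  intros [Ha Ha2] Hb He Hq.
  assert (exp s <= exp b) by (apply exp_le; auto).
  assert (0 < s^2) by (apply pow_lt; lra).
  assert (a^2 <= s^2) by (apply pow_incr; lra).
  assert ((a + 31/10) * a^2 <= (s + 31/10) * s^2) by (apply Rmult_le_compat; [lra|apply pow2_ge_0|lra|lra]).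
  apply Rmult_le_reg_r with (s^2); auto.
  replace (2 / 7 * (exp s / s ^ 2) * s ^ 2) with (2/7 * exp s) by (field; lra). lra.
Qed.

Lemma expn k : exp (INR k) <= (840/309)^k.
Proof. apply exp_nat_up. Qed.

Lemma small_ineq s : 0 < s -> 1/2 <= s^2 -> s <= 7 -> 2/7 * (exp s / s^2) <= s + 31/10.
Proof.
  intros H0 H1 H7.
  assert (Hs7 : 7/10 <= s) by nra.
  destruct (Rle_dec s 1).
  { assert (exp s <= 840/309) by (eapply Rle_trans; [apply exp_le; apply r|]; pose proof e_bounds; lra).
    apply Rmult_le_reg_r with (s^2). lra.
    replace (2 / 7 * (exp s / s ^ 2) * s ^ 2) with (2/7 * exp s) by (field; lra). nra. }
  destruct (Rle_dec s 2).
  { apply (piece s 1 (INR 2) ((840/309)^2)); [split; lra|simpl; lra|apply expn|lra]. }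
  destruct (Rle_dec s 3).
  { apply (piece s 2 (INR 3) ((840/309)^3)); [split; lra|simpl; lra|apply expn|lra]. }
  destruct (Rle_dec s 4).
  { apply (piece s 3 (INR 4) ((840/309)^4)); [split; lra|simpl; lra|apply expn|lra]. }
  destruct (Rle_dec s 5).
  { apply (piece s 4 (INR 5) ((840/309)^5)); [split; lra|simpl; lra|apply expn|lra]. }
  destruct (Rle_dec s 6).
  { apply (piece s 5 (INR 6) ((840/309)^6)); [split; lra|simpl; lra|apply expn|lra]. }
  { apply (piece s 6 (INR 7) ((840/309)^7)); [split; lra|simpl; lra|apply expn|lra]. }
Qed.

Lemma exp_m11 : 3/10 <= exp (- (11/10)).
Proof.
  replace (- (11/10)) with (-1 + - (1/10)) by field. rewrite exp_plus.
  pose proof inv_e_bounds. pose proof (exp_ineq1_le (- (1/10))).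
  assert (0 < exp (-1)) by apply exp_pos. nra.
Qed.

Lemma small_range a1 g c t : 0 < g -> 0 < t -> 0 < c <= 3/5 * g -> 0 <= Wf a1 t <= 1 ->
  0 < ln (g * t) -> 1/2 <= ln (g*t) ^ 2 -> ln (g * t) <= 7 ->
  c * Wf a1 t <= 2 * (exp 1 * g)^2 * t * exp (- (2/7) * (g * t / (ln (g*t))^2)).
Proof.
  intros Hg Ht Hc HW H0 H1 H7.
  rewrite rhs_rewrite by auto.
  assert (Hu : 0 < g * t) by (apply Rmult_lt_0_compat; lra).
  pose proof (small_ineq (ln (g*t)) H0 H1 H7). rewrite exp_ln in H by auto.
  assert (3/10 <= exp (2 + ln (g * t) - 2 / 7 * (g * t / ln (g * t) ^ 2))).
  { eapply Rle_trans. apply exp_m11. apply exp_le. lra. }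
  assert (c * Wf a1 t <= 3/5 * g) by nra.
  nra.
Qed.

Theorem mainTheorem1 (gamma a1 : R) (hgamma : 0 < gamma) (ha1 : 0 < a1)
  (hsum : infinite_sum (fun k => aseq a1 (S k)) (gamma / 2)) :
  exists W : R -> R,
    (forall t, Un_cv (fun N => partial_prod a1 N t) (W t)) /\
    (forall t, W (- t) = W t) /\
    (forall t, 0 <= W t) /\
    exists c : R, 0 < c /\
      improper_integral_R (fun t => c * W t) 1 /\
      forall t, t >= exp (1 / sqrt 2) / gamma ->
        0 <= c * W t /\
        c * W t <= 2 * (exp 1 * gamma)^2 * t *
                   exp (- (2 / 7) * (gamma * t / (ln (gamma * t))^2)).
Proof.
  assert (Hs : Un_cv (fun n => SA a1 (S n)) (gamma/2)).
  { intros eps He. destruct (hsum eps He) as [N HN]. exists N. intros n Hn.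
    rewrite <- sum_SA. apply HN; auto. }
  exists (Wf a1). split; [apply W_cv|]. split; [apply W_even|]. split; [apply W_nonneg|].
  destruct (improper a1 gamma ha1 hgamma Hs) as [c [Hc0 [Hc1 Hint]]].
  exists c. split; auto. split; auto.
  intros t Ht.
  assert (Hsq : 0 < sqrt 2) by (apply sqrt_lt_R0; lra).
  assert (Hsq2 : sqrt 2 * sqrt 2 = 2) by (apply sqrt_sqrt; lra).
  assert (Hr0 : 0 < 1 / sqrt 2) by (apply Rdiv_lt_0_compat; lra).
  assert (Hr2 : (1 / sqrt 2)^2 = 1/2) by (field_simplify; [rewrite <- (pow2_sqrt 2) at 2 by lra; field|]; lra).
  assert (Hu : exp (1 / sqrt 2) <= gamma * t).
  { apply Rmult_le_reg_r with (/ gamma). apply Rinv_0_lt_compat; lra.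
    replace (gamma * t * / gamma) with t by (field; lra). unfold Rdiv in Ht. lra. }
  assert (Hu0 : 0 < gamma * t) by (pose proof (exp_pos (1 / sqrt 2)); lra).
  assert (Ht0 : 0 < t).
  { apply Rmult_lt_reg_l with gamma; lra. }
  assert (Hs0 : 1 / sqrt 2 <= ln (gamma * t)).
  { rewrite <- (ln_exp (1 / sqrt 2)). apply ln_le'; auto. apply exp_pos. }
  pose proof (W_nonneg a1 t). pose proof (W_le1 a1 t).
  split. apply Rmult_le_pos; lra.
  destruct (Rle_dec (ln (gamma * t)) 7).
  - apply small_range; auto; try lra.
    rewrite <- Hr2. apply pow_incr. lra.
  - apply large_range; auto; try lra. apply (alpha_lb a1 gamma); auto.
Qed.
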